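(* Let $\mathcal R$ be a commutative ring with identity, $\mathcal M,\mathcal N$ modules over $\mathcal R$, $\Omega\subseteq\mathcal M_{\mathrm{nc}}$ a right admissible nc set, $f:\Omega\to\mathcal N_{\mathrm{nc}}$ a nc function, $n\in\mathbb N$ and $Y\in\Omega_n$. Then for each $N\in\mathbb N$ and every $X\in\Omega_n$, $$f(X)=\sum_{\ell=0}^N\Delta_R^\ell f(\underbrace{Y,\dots,Y}_{\ell+1})(\underbrace{X-Y,\dots,X-Y}_{\ell})+\Delta_R^{N+1}f(\underbrace{Y,\dots,Y}_{N+1},X)(\underbrace{X-Y,\dots,X-Y}_{N+1}).$$
   Context: $\mathcal M_{\mathrm{nc}}=\coprod_{n\ge1}\mathcal M^{n\times n}$; matrices over $\mathcal R$ act on matrices over $\mathcal M,\mathcal N$ by matrix multiplication; $X\oplus Y=\begin{bmatrix}X&0\\0&Y\end{bmatrix}$. A nc set is a subset $\Omega\subseteq\mathcal M_{\mathrm{nc}}$ closed under direct sums, $\Omega_n=\Omega\cap\mathcal M^{n\times n}$. A nc function $f:\Omega\to\mathcal N_{\mathrm{nc}}$ satisfies $f(\Omega_n)\subseteq\mathcal N^{n\times n}$, $f(X\oplus Y)=f(X)\oplus f(Y)$, and $f(SXS^{-1})=Sf(X)S^{-1}$ whenever $S\in\mathcal R^{n\times n}$ is invertible and $X,SXS^{-1}\in\Omega_n$. $\Omega$ is right admissible if for all $X\in\Omega_n$, $Y\in\Omega_m$, $Z\in\mathcal M^{n\times m}$ there is an invertible $r\in\mathcal R$ with $\begin{bmatrix}X&rZ\\0&Y\end{bmatrix}\in\Omega_{n+m}$.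 Higher order difference-differential operators: let $\tilde\Omega=\{SXS^{-1}: X\in\Omega_n,\ S\in\mathcal R^{n\times n}\text{ invertible},\ n\in\mathbb N\}$; $f$ extends uniquely to a nc function $\tilde f$ on $\tilde\Omega$ by $\tilde f(SXS^{-1})=Sf(X)S^{-1}$. If $\Omega$ is right admissible, then for $X^j\in\Omega_{n_j}$ ($j=0,\dots,\ell$) and $Z^j\in\mathcal M^{n_{j-1}\times n_j}$ ($j=1,\dots,\ell$), the block upper bidiagonal matrix $B$ with diagonal blocks $X^0,\dots,X^\ell$, blocks $Z^1,\dots,Z^\ell$ directly above the diagonal and zeros elsewhere lies in $\tilde\Omega$, and $\Delta_R^\ell f(X^0,\dots,X^\ell)(Z^1,\dots,Z^\ell)\in\mathcal N^{n_0\times n_\ell}$ denotes the $(1,\ell+1)$ block entry of $\tilde f(B)$; it is $\mathcal R$-multilinear in $(Z^1,\dots,Z^\ell)$, and $\Delta_R^0f=f$. *)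

(* Defs.v *)
From HB Require Import structures.
From mathcomp Require Import all_boot all_order all_algebra.
From Stdlib Require Import ClassicalEpsilon.
Set Implicit Arguments. Unset Strict Implicit. Unset Printing Implicit Defensive.
Import GRing.Theory.
Local Open Scope ring_scope.

Section NC.
Variables (R : comPzRingType) (M N : lmodType R).

Definition mxlact (V : lmodType R) p q r (S : 'M[R]_(p, q)) (X : 'M[V]_(q, r))
  : 'M[V]_(p, r) := \matrix_(i, j) \sum_k S i k *: X k j.
(* Right action: (X T)_{ij} = sum_k X_{ik} T_{kj}  (R is commutative) *)
Definition mxract (V : lmodType R) p q r (X : 'M[V]_(p, q)) (T : 'M[R]_(q, r))
  : 'M[V]_(p, r) := \matrix_(i, j) \sum_k T k j *: X i k.

Definition mxinverse n (S T : 'M[R]_n) := S *m T = 1%:M /\ T *m S = 1%:M.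

(* A subset of M_nc: Omega n is Omega_n; only sizes n >= 1 matter. *)
Definition ncsubset := forall n : nat, 'M[M]_n -> Prop.

Definition nc_set (Om : ncsubset) :=
  forall n m (X : 'M[M]_n) (Y : 'M[M]_m), (0 < n)%N -> (0 < m)%N ->
    Om n X -> Om m Y -> Om (n + m)%N (block_mx X 0 0 Y).

Definition right_admissible (Om : ncsubset) :=
  forall n m (X : 'M[M]_n) (Y : 'M[M]_m) (Z : 'M[M]_(n, m)),
    (0 < n)%N -> (0 < m)%N -> Om n X -> Om m Y ->
    exists r r' : R, r * r' = 1 /\ Om (n + m)%N (block_mx X (map_mx (fun z => r *: z) Z) 0 Y).

(* f is given on all square matrices; only its values on Omega matter. *)
Definition ncfun := forall n : nat, 'M[M]_n -> 'M[N]_n.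

Definition nc_function (Om : ncsubset) (f : ncfun) :=
  (forall n m (X : 'M[M]_n) (Y : 'M[M]_m), (0 < n)%N -> (0 < m)%N ->
     Om n X -> Om m Y ->
     f (n + m)%N (block_mx X 0 0 Y) = block_mx (f n X) 0 0 (f m Y)) /\
  (forall n (X : 'M[M]_n) (S T : 'M[R]_n), (0 < n)%N -> mxinverse S T ->
     Om n X -> Om n (mxlact S (mxract X T)) ->
     f n (mxlact S (mxract X T)) = mxlact S (mxract (f n X) T)).

Definition ext_value (Om : ncsubset) (f : ncfun) k (B : 'M[M]_k) (V : 'M[N]_k) :=
  exists (X : 'M[M]_k) (S T : 'M[R]_k), (0 < k)%N /\ mxinverse S T /\ Om k X /\
    B = mxlact S (mxract X T) /\ V = mxlact S (mxract (f k X) T).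

(* the extension f~ of f to Omega~ (well defined on Omega~; arbitrary elsewhere) *)
Definition ftilde (Om : ncsubset) (f : ncfun) k (B : 'M[M]_k) : 'M[N]_k :=
  epsilon (inhabits 0) (ext_value Om f B).

(* Block upper bidiagonal matrix with l+1 diagonal blocks Xs 0, ..., Xs l (all
   n x n) and Zs 0, ..., Zs (l-1) (= Z^1, ..., Z^l) directly above the diagonal. *)
Definition bidiag n l (Xs Zs : nat -> 'M[M]_n)
  : 'M[M]_(\sum_(i < l.+1) n) :=
  mxblock (p_ := fun _ : 'I_l.+1 => n) (q_ := fun _ : 'I_l.+1 => n)
    (fun i j => if (i : nat) == j then Xs i
                else if (j : nat) == i.+1 then Zs i else 0).

(* Delta_R^l f (Xs 0, ..., Xs l)(Zs 0, ..., Zs (l-1)) : the (1, l+1) block of f~(B) *)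
Definition DeltaR (Om : ncsubset) (f : ncfun) n l (Xs Zs : nat -> 'M[M]_n)
  : 'M[N]_n :=
  submxblock (p_ := fun _ : 'I_l.+1 => n) (q_ := fun _ : 'I_l.+1 => n)
    (ftilde Om f (bidiag l Xs Zs)) ord0 ord_max.

End NC.

(* Main.v *)
Require Import Defs.
From HB Require Import structures.
From mathcomp Require Import all_boot all_order all_algebra.
From Stdlib Require Import ClassicalEpsilon.
From mathcomp Require Import zify.
Set Implicit Arguments. Unset Strict Implicit. Unset Printing Implicit Defensive.
Import GRing.Theory.
Local Open Scope ring_scope.

Section Act.
Variables (R : comPzRingType) (V : lmodType R).
Definition scm (a : R) p q (X : 'M[V]_(p,q)) := map_mx (fun z => a *: z) X.

Lemma lactA p q r s (S : 'M[R]_(p,q)) (S' : 'M[R]_(q,r)) (X : 'M[V]_(r,s)) :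
  mxlact S (mxlact S' X) = mxlact (S *m S') X.
Proof.
apply/matrixP => i j; rewrite !mxE.
under eq_bigr do rewrite mxE scaler_sumr.
under [RHS]eq_bigr do rewrite mxE scaler_suml.
rewrite exchange_big /=; apply: eq_bigr => l _; apply: eq_bigr => k _.
by rewrite scalerA.
Qed.

Lemma ractA p q r s (X : 'M[V]_(p,q)) (T : 'M[R]_(q,r)) (T' : 'M[R]_(r,s)) :
  mxract (mxract X T) T' = mxract X (T *m T').
Proof.
apply/matrixP => i j; rewrite !mxE.
under eq_bigr do rewrite mxE scaler_sumr.
under [RHS]eq_bigr do rewrite mxE scaler_suml.
rewrite exchange_big /=; apply: eq_bigr => l _; apply: eq_bigr => k _.
by rewrite scalerA mulrC.
Qed.

Lemma lractC p q r s (S : 'M[R]_(p,q)) (X : 'M[V]_(q,r)) (T : 'M[R]_(r,s)) :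
  mxlact S (mxract X T) = mxract (mxlact S X) T.
Proof.
apply/matrixP => i j; rewrite !mxE.
under eq_bigr do rewrite mxE scaler_sumr.
under [RHS]eq_bigr do rewrite mxE scaler_sumr.
rewrite exchange_big /=; apply: eq_bigr => l _; apply: eq_bigr => k _.
by rewrite !scalerA mulrC.
Qed.

Lemma lact1 p q (X : 'M[V]_(p,q)) : mxlact 1%:M X = X.
Proof.
apply/matrixP => i j; rewrite !mxE (bigD1 i) //= big1 => [|k /negbTE nki].
  by rewrite mxE eqxx scale1r addr0.
by rewrite mxE eq_sym nki scale0r.
Qed.

Lemma ract1 p q (X : 'M[V]_(p,q)) : mxract X 1%:M = X.
Proof.
apply/matrixP => i j; rewrite !mxE (bigD1 j) //= big1 => [|k /negbTE nki].
  by rewrite mxE eqxx scale1r addr0.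
by rewrite mxE nki scale0r.
Qed.

Lemma lact0l p q r (X : 'M[V]_(q,r)) : mxlact (0 : 'M[R]_(p,q)) X = 0.
Proof. by apply/matrixP => i j; rewrite !mxE big1 // => k _; rewrite mxE scale0r. Qed.
Lemma lact0r p q r (S : 'M[R]_(p,q)) : mxlact S (0 : 'M[V]_(q,r)) = 0.
Proof. by apply/matrixP => i j; rewrite !mxE big1 // => k _; rewrite mxE scaler0. Qed.
Lemma ract0l p q r (T : 'M[R]_(q,r)) : mxract (0 : 'M[V]_(p,q)) T = 0.
Proof. by apply/matrixP => i j; rewrite !mxE big1 // => k _; rewrite mxE scaler0. Qed.
Lemma ract0r p q r (X : 'M[V]_(p,q)) : mxract X (0 : 'M[R]_(q,r)) = 0.
Proof. by apply/matrixP => i j; rewrite !mxE big1 // => k _; rewrite mxE scale0r. Qed.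

Lemma ractNr p q r (X : 'M[V]_(p,q)) (T : 'M[R]_(q,r)) : mxract X (- T) = - mxract X T.
Proof.
apply/matrixP => i j; rewrite !mxE -sumrN; apply: eq_bigr => k _.
by rewrite mxE scaleNr.
Qed.

Lemma lactZl p q r a (S : 'M[R]_(p,q)) (X : 'M[V]_(q,r)) :
  mxlact (a *: S) X = scm a (mxlact S X).
Proof.
apply/matrixP => i j; rewrite !mxE /= scaler_sumr; apply: eq_bigr => k _.
by rewrite mxE scalerA.
Qed.

Lemma ractZr p q r a (X : 'M[V]_(p,q)) (T : 'M[R]_(q,r)) :
  mxract X (a *: T) = scm a (mxract X T).
Proof.
apply/matrixP => i j; rewrite !mxE /= scaler_sumr; apply: eq_bigr => k _.
by rewrite mxE scalerA.
Qed.

Lemma ractZl p q r a (X : 'M[V]_(p,q)) (T : 'M[R]_(q,r)) :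
  mxract (scm a X) T = scm a (mxract X T).
Proof.
apply/matrixP => i j; rewrite !mxE /= scaler_sumr; apply: eq_bigr => k _.
by rewrite mxE !scalerA mulrC.
Qed.

Lemma lact_row p q r1 r2 (A : 'M[R]_(p,q)) (x : 'M[V]_(q,r1)) (y : 'M[V]_(q,r2)) :
  mxlact A (row_mx x y) = row_mx (mxlact A x) (mxlact A y).
Proof.
apply/matrixP=> i k; rewrite !mxE.
by case defk: (split k) => /[!mxE]; under eq_bigr do rewrite mxE defk.
Qed.

Lemma lact_col p1 p2 q r (a : 'M[R]_(p1,q)) (c : 'M[R]_(p2,q)) (X : 'M[V]_(q,r)) :
  mxlact (col_mx a c) X = col_mx (mxlact a X) (mxlact c X).
Proof.
apply/matrixP=> i k; rewrite !mxE.
by case defi: (split i) => /[!mxE]; under eq_bigr do rewrite mxE defi.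
Qed.

Lemma lact_row_col p q1 q2 r (a : 'M[R]_(p,q1)) (b : 'M[R]_(p,q2))
  (x : 'M[V]_(q1,r)) (z : 'M[V]_(q2,r)) :
  mxlact (row_mx a b) (col_mx x z) = mxlact a x + mxlact b z.
Proof.
apply/matrixP=> i k; rewrite !mxE big_split_ord /=.
congr (_ + _); apply: eq_bigr => j _; first by rewrite row_mxEl col_mxEu.
by rewrite row_mxEr col_mxEd.
Qed.

Lemma ract_row p q r1 r2 (X : 'M[V]_(p,q)) (a : 'M[R]_(q,r1)) (b : 'M[R]_(q,r2)) :
  mxract X (row_mx a b) = row_mx (mxract X a) (mxract X b).
Proof.
apply/matrixP=> i k; rewrite !mxE.
by case defk: (split k) => /[!mxE]; under eq_bigr do rewrite mxE defk.
Qed.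

Lemma ract_col p1 p2 q r (x : 'M[V]_(p1,q)) (z : 'M[V]_(p2,q)) (T : 'M[R]_(q,r)) :
  mxract (col_mx x z) T = col_mx (mxract x T) (mxract z T).
Proof.
apply/matrixP=> i k; rewrite !mxE.
by case defi: (split i) => /[!mxE]; under eq_bigr do rewrite mxE defi.
Qed.

Lemma ract_row_col p q1 q2 r (x : 'M[V]_(p,q1)) (y : 'M[V]_(p,q2))
  (a : 'M[R]_(q1,r)) (c : 'M[R]_(q2,r)) :
  mxract (row_mx x y) (col_mx a c) = mxract x a + mxract y c.
Proof.
apply/matrixP=> i k; rewrite !mxE big_split_ord /=.
congr (_ + _); apply: eq_bigr => j _; first by rewrite row_mxEl col_mxEu.
by rewrite row_mxEr col_mxEd.
Qed.

Lemma lact_block m1 m2 n1 n2 p1 p2 (a : 'M[R]_(m1,n1)) (b : 'M[R]_(m1,n2))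
  (c : 'M[R]_(m2,n1)) (d : 'M[R]_(m2,n2)) (x : 'M[V]_(n1,p1)) (y : 'M[V]_(n1,p2))
  (z : 'M[V]_(n2,p1)) (w : 'M[V]_(n2,p2)) :
  mxlact (block_mx a b c d) (block_mx x y z w) =
  block_mx (mxlact a x + mxlact b z) (mxlact a y + mxlact b w)
           (mxlact c x + mxlact d z) (mxlact c y + mxlact d w).
Proof.
by rewrite block_mxEv lact_col block_mxEh !lact_row !lact_row_col -block_mxEv.
Qed.

Lemma ract_block m1 m2 n1 n2 p1 p2 (x : 'M[V]_(m1,n1)) (y : 'M[V]_(m1,n2))
  (z : 'M[V]_(m2,n1)) (w : 'M[V]_(m2,n2)) (a : 'M[R]_(n1,p1)) (b : 'M[R]_(n1,p2))
  (c : 'M[R]_(n2,p1)) (d : 'M[R]_(n2,p2)) :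
  mxract (block_mx x y z w) (block_mx a b c d) =
  block_mx (mxract x a + mxract y c) (mxract x b + mxract y d)
           (mxract z a + mxract w c) (mxract z b + mxract w d).
Proof.
by rewrite block_mxEv ract_col block_mxEh !ract_row !ract_row_col -block_mxEv.
Qed.

Lemma lactZr p q r a (S : 'M[R]_(p,q)) (X : 'M[V]_(q,r)) :
  mxlact S (scm a X) = scm a (mxlact S X).
Proof.
apply/matrixP => i j; rewrite !mxE /= scaler_sumr; apply: eq_bigr => k _.
by rewrite mxE !scalerA mulrC.
Qed.

Lemma scmA a b p q (X : 'M[V]_(p,q)) : scm a (scm b X) = scm (a * b) X.
Proof. by apply/matrixP => i j; rewrite !mxE scalerA. Qed.

Lemma scm1 p q (X : 'M[V]_(p,q)) : scm 1 X = X.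
Proof. by apply/matrixP => i j; rewrite !mxE scale1r. Qed.

Lemma ract_mxblock p q r (p_ : 'I_p -> nat) (q_ : 'I_q -> nat) (r_ : 'I_r -> nat)
  (B_ : forall i j, 'M[V]_(p_ i, q_ j)) (C_ : forall j k, 'M[R]_(q_ j, r_ k)) :
  mxract (mxblock B_) (mxblock C_) =
  mxblock (fun i k => \sum_j mxract (B_ i j) (C_ j k)).
Proof.
apply/matrixP => s t; rewrite !mxE summxE; under [RHS]eq_bigr do rewrite !mxE.
rewrite sig_big_dep/= (reindex _ tagnat.sig_bij_on)/=.
by apply: eq_bigr=> l _; rewrite !mxE.
Qed.

Lemma lact_mxblock p q r (p_ : 'I_p -> nat) (q_ : 'I_q -> nat) (r_ : 'I_r -> nat)
  (A_ : forall i j, 'M[R]_(p_ i, q_ j)) (B_ : forall j k, 'M[V]_(q_ j, r_ k)) :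
  mxlact (mxblock A_) (mxblock B_) =
  mxblock (fun i k => \sum_j mxlact (A_ i j) (B_ j k)).
Proof.
apply/matrixP => s t; rewrite !mxE summxE; under [RHS]eq_bigr do rewrite !mxE.
rewrite sig_big_dep/= (reindex _ tagnat.sig_bij_on)/=.
by apply: eq_bigr=> l _; rewrite !mxE.
Qed.

Lemma ract_mxblock_col p q m (p_ : 'I_p -> nat) (q_ : 'I_q -> nat)
  (B_ : forall i j, 'M[V]_(p_ i, q_ j)) (C_ : forall j, 'M[R]_(q_ j, m)) :
  mxract (mxblock B_) (mxcol C_) =
  mxcol (fun i => \sum_j mxract (B_ i j) (C_ j)).
Proof.
apply/matrixP => s t; rewrite !mxE summxE; under [RHS]eq_bigr do rewrite !mxE.
rewrite sig_big_dep/= (reindex _ tagnat.sig_bij_on)/=.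
by apply: eq_bigr=> l _; rewrite !mxE.
Qed.

Lemma lact_mxcol p m k (p_ : 'I_p -> nat) (C_ : forall i, 'M[R]_(p_ i, m))
  (X : 'M[V]_(m, k)) :
  mxlact (mxcol C_) X = mxcol (fun i => mxlact (C_ i) X).
Proof. by apply/matrixP => s t; rewrite !mxE; apply: eq_bigr => l _; rewrite !mxE. Qed.

Lemma ract_if p q (X : 'M[V]_(p,q)) (b : bool) :
  mxract X (if b then 1%:M else 0) = if b then X else 0.
Proof. by case: b; rewrite ?ract1 ?ract0r. Qed.

Lemma lact_if p q (X : 'M[V]_(p,q)) (b : bool) :
  mxlact (if b then 1%:M else 0) X = if b then X else 0.
Proof. by case: b; rewrite ?lact1 ?lact0l. Qed.

End Act.

Section Sums.
Variable V : zmodType.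

Lemma sum_if_ord p (g : 'I_p -> V) (k0 : 'I_p) :
  \sum_(m < p) (if (m : nat) == k0 then g m else 0) = g k0.
Proof.
rewrite (bigD1 k0) //= eqxx big1 ?addr0 // => m mk.
by rewrite ifF //; apply: negbTE.
Qed.

Lemma sum_if_ord' p (g : 'I_p -> V) (k0 : 'I_p) :
  \sum_(m < p) (if (k0 : nat) == m then g m else 0) = g k0.
Proof. by rewrite -(sum_if_ord g k0); apply: eq_bigr => m _; rewrite eq_sym. Qed.

Lemma sum_if_nat p (g : nat -> V) k :
  \sum_(m < p) (if (m : nat) == k then g m else 0) = if (k < p)%N then g k else 0.
Proof.
case: (ltnP k p) => hk; first exact: (sum_if_ord (fun m : 'I_p => g m) (Ordinal hk)).
apply: big1 => m _; rewrite ifF //; apply/negbTE.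
by rewrite neq_ltn (leq_trans (ltn_ord m) hk).
Qed.

Lemma sum_if_nat' p (g : nat -> V) k :
  \sum_(m < p) (if k == (m : nat) then g m else 0) = if (k < p)%N then g k else 0.
Proof. by rewrite -sum_if_nat; apply: eq_bigr => m _; rewrite eq_sym. Qed.

Lemma split_if (i j : nat) (a b : V) :
  (if i == j then a else if j == i.+1 then b else 0) =
  (if j == i then a else 0) + (if j == i.+1 then b else 0).
Proof.
rewrite eq_sym; case: (eqVneq j i) => [->|_]; last by rewrite add0r.
by rewrite (ltn_eqF (ltnSn i)) addr0.
Qed.

End Sums.

Ltac nrm := repeat (rewrite -lractC || rewrite lactA || rewrite ractA).

Unset Implicit Arguments.
Section NCT.
Variables (R : comPzRingType) (M N : lmodType R).
Variables (Om : ncsubset M) (f : ncfun M N).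
Hypotheses (HOm : nc_set Om) (Hadm : right_admissible Om) (Hf : nc_function Om f).

Definition inOt k (B : 'M[M]_k) := exists X (S T : 'M[R]_k),
  (0 < k)%N /\ mxinverse S T /\ Om k X /\ B = mxlact S (mxract X T).

Local Notation F := (ftilde Om f).

Lemma ext_uniq k (B : 'M[M]_k) V1 V2 :
  ext_value Om f B V1 -> ext_value Om f B V2 -> V1 = V2.
Proof.
move=> [X1 [S1 [T1 [k0 [[e1 e1'] [O1 [eB ->]]]]]]] [X2 [S2 [T2 [_ [[e2 e2'] [O2 [eB2 ->]]]]]]].
have hX2 : X2 = mxlact (T2 *m S1) (mxract X1 (T1 *m S2)).
  have <- : mxlact T2 (mxract (mxlact S2 (mxract X2 T2)) S2) = X2.
    by nrm; rewrite e2' lact1 ract1.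
  by rewrite -eB2 eB; nrm.
have inv : mxinverse (T2 *m S1) (T1 *m S2).
  split.
    by rewrite mulmxA -(mulmxA T2) e1 mulmx1 e2'.
  by rewrite mulmxA -(mulmxA T1) e2 mulmx1 e1'.
have := (proj2 Hf) k X1 _ _ k0 inv O1; rewrite -hX2 => /(_ O2) ->.
nrm; rewrite mulmxA e2 mul1mx -mulmxA e2 mulmx1 //.
Qed.

Lemma Fval k (B : 'M[M]_k) X S T : (0 < k)%N -> mxinverse S T -> Om k X ->
  B = mxlact S (mxract X T) -> F B = mxlact S (mxract (f k X) T).
Proof.
move=> k0 inv OX eB.
have H : ext_value Om f B (mxlact S (mxract (f k X) T)).
  by exists X, S, T.
have := epsilon_spec (inhabits 0) (ext_value Om f B) (ex_intro _ _ H).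
by move/ext_uniq => /(_ _ H).
Qed.

Lemma base k m (P : 'M[M]_k) (Q : 'M[M]_m) (A : 'M[R]_(k,m)) :
  (0 < k)%N -> (0 < m)%N -> Om k P -> Om m Q -> mxract P A = mxlact A Q ->
  mxract (f k P) A = mxlact A (f m Q).
Proof.
move=> k0 m0 OP OQ h.
have OD := HOm k m P Q k0 m0 OP OQ.
have km0 : (0 < k + m)%N by rewrite addn_gt0 k0.
have inv : mxinverse (block_mx 1%:M A 0 1%:M) (block_mx 1%:M (-A) 0 1%:M).
  split; rewrite mulmx_block !mul1mx !mulmx1 !mul0mx !mulmx0 ?addr0 ?add0r
    ?addNr ?addrN -?scalar_mx_block //.
have eD : mxlact (block_mx 1%:M A 0 1%:M) (mxract (block_mx P 0 0 Q) (block_mx 1%:M (-A) 0 1%:M)) = block_mx P 0 0 Q.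
  rewrite ract_block lact_block ?ract1 ?ract0l ?ract0r ?ractNr ?lact1 ?lact0l ?lact0r ?addr0 ?add0r.
  rewrite (@lact0r _ M _ _ _ A). by rewrite addr0 -h addNr.
have := (proj2 Hf) (k + m)%N _ _ _ km0 inv OD.
rewrite eD => /(_ OD); rewrite (proj1 Hf k m P Q k0 m0 OP OQ).
rewrite ract_block lact_block ?ract1 ?ract0l ?ract0r ?ractNr ?lact1 ?lact0l ?lact0r ?addr0 ?add0r.
rewrite (@lact0r _ N _ _ _ A) addr0.
case/eq_block_mx => _ h2 _ _.
by symmetry; apply: subr0_eq; rewrite addrC -h2.
Qed.

Lemma intertw k m (P : 'M[M]_k) (Q : 'M[M]_m) (A : 'M[R]_(k,m)) :
  inOt k P -> inOt m Q -> mxract P A = mxlact A Q -> mxract (F P) A = mxlact A (F Q).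
Proof.
move=> [P0 [S1 [T1 [k0 [[e1 e1'] [O1 eP]]]]]] [Q0 [S2 [T2 [m0 [[e2 e2'] [O2 eQ]]]]]] h.
rewrite (Fval _ _ _ _ _ k0 (conj e1 e1') O1 eP) (Fval _ _ _ _ _ m0 (conj e2 e2') O2 eQ).
pose A' := T1 *m A *m S2.
have hb : mxract P0 A' = mxlact A' Q0.
  have eP0 : P0 = mxlact T1 (mxract P S1) by rewrite eP; nrm; rewrite e1' lact1 ract1.
  rewrite eP0 /A'; nrm.
  rewrite !mulmxA e1 mul1mx -ractA h eQ; nrm.
  by rewrite e2' ract1.
have hB := base _ _ _ _ _ k0 m0 O1 O2 hb.
have eTA : T1 *m A = A' *m T2 by rewrite /A' -mulmxA e2 mulmx1.
nrm; rewrite eTA -ractA hB; nrm.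
by rewrite /A' !mulmxA e1 mul1mx.
Qed.


Lemma inOt_eq k (B B' : 'M[M]_k) : B = B' -> inOt k B -> inOt k B'.
Proof. by move=> ->. Qed.

Lemma inOt_cast k k' (e1 e2 : k = k') (B : 'M[M]_k) :
  inOt k B -> inOt k' (castmx (e1, e2) B).
Proof. by case: k' / e1 e2 => e2; rewrite castmx_id. Qed.

Lemma inOt_Om k (X : 'M[M]_k) : (0 < k)%N -> Om k X -> inOt k X.
Proof.
move=> k0 OX; exists X, 1%:M, 1%:M; do !split => //; try by rewrite mulmx1.
by rewrite lact1 ract1.
Qed.

Lemma inOt_block n m (X0 : 'M[M]_n) (W : 'M[M]_(n, m)) (L0 : 'M[M]_(m, n)) B :
  L0 = 0 -> (0 < n)%N -> Om n X0 -> inOt m B -> inOt (n + m) (block_mx X0 W L0 B).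
Proof.
move=> -> n0 OX [T0 [S [T [m0 [[e e'] [OT ->]]]]]].
have [r [r' [rr' OZ]]] := Hadm n m X0 T0 (mxract W S) n0 m0 OX OT.
exists (block_mx X0 (map_mx (fun z => r *: z) (mxract W S)) 0 T0),
  (block_mx 1%:M 0 0 (r *: S)), (block_mx 1%:M 0 0 (r' *: T)).
split; first by rewrite addn_gt0 n0.
split.
  split; rewrite mulmx_block !mulmx0 !mul0mx !mul1mx ?addr0 ?add0r
     -scalemxAl -scalemxAr scalerA ?e ?e' ?rr' ?(mulrC r') ?rr' scale1r
     -?scalar_mx_block //.
split; first exact: OZ.
rewrite ract_block lact_block ?ract1 ?ract0l ?ract0r ?lact1 ?lact0l.
rewrite ?addr0 ?add0r (@lact0r _ M _ _ _ (r *: S)).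
rewrite lactZl ractZr ractZl ractZr lactZr scmA scmA mulrC rr' !scm1 ractA e ract1.
done.
Qed.

Lemma bidiag_in n l (Xs Zs : nat -> 'M[M]_n) : (0 < n)%N ->
  (forall i, Om n (Xs i)) -> inOt _ (bidiag l Xs Zs).
Proof.
move=> n0; elim: l Xs Zs => [|l IH] Xs Zs HX.
  have h := mxEmxblock (Xs 0%N).
  have := inOt_cast _ _ (esym (big_ord1 addn (fun=> n))) (esym (big_ord1 addn (fun=> n))) (Xs 0%N) (inOt_Om _ _ n0 (HX 0%N)).
  rewrite {1}h castmx_comp castmx_id.
  apply: inOt_eq; apply: eq_mxblock => i j; by rewrite !ord1.
rewrite /bidiag mxblock_recul; apply: inOt_cast; apply: inOt_block => //=.
- by apply/matrixP => i j; rewrite !mxE /=.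
- apply: (inOt_eq _ _ _ _ (IH (fun k => Xs k.+1) (fun k => Zs k.+1) (fun i => HX i.+1))).
  apply: eq_mxblock => i j /=. by rewrite /bump !leq0n !add1n eqSS.
Qed.

Lemma main (n : nat) (Hn : (0 < n)%N) (Y : 'M[M]_n) (HY : Om n Y) (Nn : nat)
  (X : 'M[M]_n) (HX : Om n X) :
  f n X =
    \sum_(l < Nn.+1) DeltaR Om f l (fun _ => Y) (fun _ => X - Y)
    + DeltaR Om f Nn.+1 (fun k => if k == Nn.+1 then X else Y) (fun _ => X - Y).
Proof.
pose Xs' := fun k => if k == Nn.+1 then X else Y.
have HX' : forall i, Om n (Xs' i) by move=> i; rewrite /Xs'; case: (_ == _).
have HC := bidiag_in n Nn.+1 Xs' (fun _ => X - Y) Hn HX'.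
have HXo := inOt_Om n X Hn HX.
have FX : F X = f n X.
  rewrite (Fval n X X 1%:M 1%:M Hn _ HX) ?lact1 ?ract1 //.
  by split; rewrite mulmx1.
set C := bidiag Nn.+1 Xs' (fun _ => X - Y).
have step1 : f n X = \sum_(j < Nn.+2)
   submxblock (p_ := fun _ : 'I_Nn.+2 => n) (q_ := fun _ : 'I_Nn.+2 => n) (F C) ord0 j.
  pose A1 := mxcol (p_ := fun _ : 'I_Nn.+2 => n) (fun _ => (1%:M : 'M[R]_n)).
  have hCA : mxract C A1 = mxlact A1 X.
    rewrite /C /bidiag ract_mxblock_col lact_mxcol; apply: eq_mxcol => i.
    rewrite lact1; under eq_bigr do rewrite ract1 split_if.
    rewrite big_split /= (sum_if_nat _ (fun _ => Xs' i)) (sum_if_nat _ (fun _ => X - Y)) /=.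
    rewrite ltn_ord /Xs'; case: eqP => [->|hi]; first by rewrite ltnn addr0.
    have -> : (i.+1 < Nn.+2)%N.
      by rewrite ltnS ltn_neqAle -ltnS ltn_ord andbT; apply/eqP.
    by rewrite addrC subrK.
  have := intertw _ _ C X A1 HC HXo hCA.
  rewrite FX -[F C](@submxblockK _ _ _ (fun _ : 'I_Nn.+2 => n) (fun _ : 'I_Nn.+2 => n)).
  rewrite ract_mxblock_col lact_mxcol => /eq_mxcolP /(_ ord0).
  rewrite lact1 => <-; rewrite submxblockK; apply: eq_bigr => j _; by rewrite ract1.
have step2 : forall j : 'I_Nn.+1,
   submxblock (p_ := fun _ : 'I_Nn.+2 => n) (q_ := fun _ : 'I_Nn.+2 => n) (F C) ord0
     (widen_ord (leqnSn _) j) = DeltaR Om f j (fun _ => Y) (fun _ => X - Y).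
  move=> j.
  set Bj := bidiag j (fun _ => Y) (fun _ => X - Y).
  have HB : inOt _ Bj by apply: bidiag_in.
  pose A2 := mxblock (p_ := fun _ : 'I_Nn.+2 => n) (q_ := fun _ : 'I_j.+1 => n)
     (fun i k => if (i : nat) == k then (1%:M : 'M[R]_n) else 0).
  have hCA : mxract C A2 = mxlact A2 Bj.
    rewrite /C /Bj /bidiag ract_mxblock lact_mxblock; apply: eq_mxblock => i k.
    under eq_bigr do rewrite ract_if.
    under [RHS]eq_bigr do rewrite lact_if.
    rewrite (sum_if_nat _ (fun m => if (i : nat) == m then Xs' i
                 else if m == i.+1 then X - Y else 0)).
    rewrite (sum_if_nat' _ (fun m => if m == k then Y
                 else if (k : nat) == m.+1 then X - Y else 0)).
    have hk : (k < Nn.+2)%N by have := ltn_ord k; have := ltn_ord j; lia.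
    rewrite hk; case: (ltnP i j.+1) => hij.
      rewrite /Xs' (_ : ((i : nat) == Nn.+1) = false) //.
      by apply/negbTE/eqP; have := ltn_ord j; lia.
    have h1 : ((i : nat) == k) = false by apply/negbTE/eqP; have := ltn_ord k; lia.
    have h2 : ((k : nat) == i.+1) = false by apply/negbTE/eqP; have := ltn_ord k; lia.
    by rewrite h1 h2.
  have := intertw _ _ C Bj A2 HC HB hCA.
  rewrite -[F C](@submxblockK _ _ _ (fun _ : 'I_Nn.+2 => n) (fun _ : 'I_Nn.+2 => n)).
  rewrite -[F Bj](@submxblockK _ _ _ (fun _ : 'I_j.+1 => n) (fun _ : 'I_j.+1 => n)).
  rewrite ract_mxblock lact_mxblock => /eq_mxblockP /(_ ord0 ord_max).
  under eq_bigr do rewrite ract_if.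
  under [X in _ = X -> _]eq_bigr do rewrite lact_if.
  rewrite (sum_if_ord (fun m => submxblock (F C) ord0 m) (widen_ord (leqnSn _) j)).
  rewrite (sum_if_ord' (fun m => submxblock (F Bj) m ord_max) ord0) submxblockK => ->.
  by [].
rewrite step1 big_ord_recr /=; congr (_ + _).
by apply: eq_bigr => j _; exact: step2.
Qed.

End NCT.

Theorem theorem4p1 (R : comPzRingType) (M N : lmodType R)
  (Om : ncsubset M) (f : ncfun M N)
  (HOm : nc_set Om) (Hadm : right_admissible Om) (Hf : nc_function Om f)
  (n : nat) (Hn : (0 < n)%N) (Y : 'M[M]_n) (HY : Om n Y) (Nn : nat)
  (X : 'M[M]_n) (HX : Om n X) :
  f n X =
    \sum_(l < Nn.+1) DeltaR Om f l (fun _ => Y) (fun _ => X - Y)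
    + DeltaR Om f Nn.+1 (fun k => if k == Nn.+1 then X else Y) (fun _ => X - Y).
Proof. exact: (main R M N Om f HOm Hadm Hf n Hn Y HY Nn X HX). Qed.
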